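(* For every positive integer $D$ there is a deterministic algorithm (which may use $D$) such that, in every run whose sequence of communication graphs satisfies Assumption 1 with parameter $D$, the algorithm solves consensus, and every process has decided by round $r_{ST}+4D+1$, where $r_{ST}$ is the first round for which an interval $J=[r_{ST},r_{ST}+d]$ as in Assumption 1 exists.
   Context: Model: a finite set $\Pi$ of $n\ge2$ processes runs a deterministic algorithm in synchronous lock-step rounds $r=1,2,\dots$. An adversary fixes an infinite sequence of simple directed graphs $\mathcal{G}^1,\mathcal{G}^2,\dots$ on vertex set $\Pi$; $(p\to q)\in\mathcal{G}^r$ iff $q$ receives $p$'s round-$r$ message in round $r$. In round $r$ each process $p$ broadcasts a message determined by its current state (received exactly by its out-neighbours in $\mathcal{G}^r$), then computes its new state from its current state and the set of (sender, message) pairs it received in round $r$. Consensus: each process $p$ starts with an input value $v_p$ from an ordered set $V$ and may irrevocably decide a value; Agreement: any two decided values are equal; Validity: every decided value is the input value of some process; Termination: every process eventually decides. Causality: $p$ causally influences $q$ in round $t$ if $q=p$ or $(p\to q)\in\mathcal{G}^t$; a causal chain of length $k\ge1$ from $p$ in round $t$ to $q$ is a sequence $p=p_0,\dots,p_k=q$ with $p_i$ causally influencing $p_{i+1}$ in round $t+i$; the causal distance $d_t(p,q)$ is the least such $k$ ($\infty$ if none). A root component of $\mathcal{G}^t$ is a strongly connected component $\mathcal{R}$ with no edge $(q\to p)$, $p\in\mathcal{R}$, $q\notin\mathcal{R}$. For an interval $I=[r,s]$, an $I$-vertex-stable root component is a set $\mathcal{R}\subseteq\Pi$ that, in every round $t\in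 I$, is (the vertex set of) a root component of $\mathcal{G}^t$. When each $\mathcal{G}^x$ has a unique root component $\mathcal{R}^x$, the round-$x$ network causal diameter is $D^x=\max\{d_x(p,q):p\in\mathcal{R}^x,q\in\Pi\}$, and for $I=[r,s]$, $D^I=\max\{D^x: x\in I,\ x+D^x-1\le s\}$ ($\infty$ if this set is empty). An $I$-vertex-stable root component with $I=[r,s]$ is $D$-bounded if $D\ge D^I$ and $D^{s-D+1}\le D$. Assumption 1 (parameter $D$): for every round $r$ there is exactly one root component $\mathcal{R}^r$ in $\mathcal{G}^r$; every $I$-vertex-stable root component with $|I|\ge D$ (where $|[r,s]|=s-r+1$) is $D$-bounded; and there exists an interval $J=[r_{ST},r_{ST}+d]$ with $d>4D$ such that there is a $D$-bounded $J$-vertex-stable root component. *)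

(* Defs.v *)
From mathcomp Require Import all_boot all_order.
Set Implicit Arguments.
Unset Strict Implicit.
Unset Printing Implicit Defensive.

(* Processes are 'I_n; a communication graph is a relation on 'I_n;
   G r p q  means  (p -> q) is an edge of the round-r graph (rounds r >= 1;
   G 0 is irrelevant). *)
Definition graph_seq (n : nat) := nat -> rel 'I_n.

Definition simple_graphs n (G : graph_seq n) := forall r, irreflexive (G r).

Record Algorithm (n : nat) (V : Type) := {
  St : Type;
  Msg : Type;
  init : 'I_n -> V -> St;
  send : 'I_n -> St -> Msg;
  trans : 'I_n -> St -> ('I_n -> option Msg) -> St; (* received: sender |-> message, if any *)
  decision : 'I_n -> St -> option V
}.
Arguments init {n V} a _ _.
Arguments send {n V} a _ _.
Arguments trans {n V} a _ _ _.
Arguments decision {n V} a _ _.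

Fixpoint state n V (A : Algorithm n V) (G : graph_seq n) (inp : 'I_n -> V)
    (r : nat) : 'I_n -> St A :=
  match r with
  | 0 => fun p => init A p (inp p)
  | r'.+1 => fun p =>
      trans A p (state A G inp r' p)
        (fun q => if G r'.+1 q p then Some (send A q (state A G inp r' q)) else None)
  end.

Definition decided n V (A : Algorithm n V) G inp (p : 'I_n) (r : nat) (v : V) :=
  decision A p (state A G inp r p) = Some v.

Definition solves_consensus n V (A : Algorithm n V) G (inp : 'I_n -> V) :=
  [/\
      (forall p r r' v, r <= r' -> decided A G inp p r v -> decided A G inp p r' v),
      (forall p q r r' v w, decided A G inp p r v -> decided A G inp q r' w -> v = w),
      (forall p r v, decided A G inp p r v -> exists q, v = inp q) &
      (forall p, exists r v, decided A G inp p r v)].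

Definition causes n (G : graph_seq n) (t : nat) (p q : 'I_n) : bool :=
  (p == q) || G t p q.

Fixpoint chain n (G : graph_seq n) (t k : nat) (p q : 'I_n) : Prop :=
  match k with
  | 0 => p = q
  | k'.+1 => exists m, causes G t p m /\ chain G t.+1 k' m q
  end.

(* d_t(p,q) <= k   (d_t(p,q) = least k >= 1 with a causal chain; infinite if none) *)
Definition dist_le n (G : graph_seq n) (t : nat) (p q : 'I_n) (k : nat) : Prop :=
  exists j, 0 < j <= k /\ chain G t j p q.

Definition is_SCC n (e : rel 'I_n) (R : {set 'I_n}) : Prop :=
  exists x, R = [set y | connect e x y && connect e y x].

Definition is_root_comp n (e : rel 'I_n) (R : {set 'I_n}) : Prop :=
  is_SCC e R /\ (forall p q, p \in R -> q \notin R -> ~~ e q p).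

(* D^x <= k : the round-x network causal diameter (max of d_x(p,q) over
   p in the (unique) root component R^x of G^x and q in Pi) is at most k *)
Definition diam_le n (G : graph_seq n) (x k : nat) : Prop :=
  forall R, is_root_comp (G x) R -> forall p q, p \in R -> dist_le G x p q k.

Definition vstable n (G : graph_seq n) (r s : nat) (R : {set 'I_n}) : Prop :=
  forall t, r <= t <= s -> is_root_comp (G t) R.

(* R, an [r,s]-vertex-stable root component, is D-bounded:
   D >= D^I  and  D^(s-D+1) <= D, where
   D^I = max { D^x : x in I, x + D^x - 1 <= s } (infinite if the set is empty).
   "x + D^x - 1 <= s" for x in I is written  D^x <= s + 1 - x. *)
Definition D_bounded n (G : graph_seq n) (r s : nat) (R : {set 'I_n}) (D : nat) : Prop :=
  [/\ vstable G r s R,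
      (exists x, r <= x <= s /\ diam_le G x (s + 1 - x)),
      (forall x, r <= x <= s -> diam_le G x (s + 1 - x) -> diam_le G x D) &
      diam_le G (s + 1 - D) D].

Definition good_start n (G : graph_seq n) (D r : nat) : Prop :=
  0 < r /\ exists d, 4 * D < d /\ exists R, vstable G r (r + d) R /\ D_bounded G r (r + d) R D.

Definition Assumption1 n (G : graph_seq n) (D : nat) : Prop :=
  [/\ (forall r, 0 < r -> exists! R, is_root_comp (G r) R),
      (forall r s R, 0 < r -> r <= s -> D <= s - r + 1 -> vstable G r s R ->
         D_bounded G r s R D) &
      (exists r, good_start G D r)].

(* Main.v *)
Require Import Defs.
From mathcomp Require Import all_boot all_order.
From mathcomp Require Import zify.
From Stdlib Require Import Lia.
From Stdlib Require ClassicalEpsilon.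
Import Order.TTheory.

Set Implicit Arguments.
Unset Strict Implicit.
Unset Printing Implicit Defensive.

Definition asb (P : Prop) : bool :=
  if ClassicalEpsilon.excluded_middle_informative P then true else false.
Lemma asbP (P : Prop) : asb P <-> P.
Proof. rewrite /asb; case: ClassicalEpsilon.excluded_middle_informative => //. Qed.

Section Alg.
Variables (D n : nat) (disp : Order.disp_t) (V : orderType disp).

Record st := mkSt { rnd : nat; prr : nat * V; dec : option V;
                    info : nat -> 'I_n -> option ('I_n -> bool) }.

Definition lexle (a b : nat * V) : bool :=
  (a.1 < b.1) || ((a.1 == b.1) && (a.2 <= b.2)%O).
Definition lexmax (a b : nat * V) := if lexle a b then b else a.

Definition mergeP (own : nat * V) (rcv : 'I_n -> option st) : nat * V :=
  foldr (fun s acc => match rcv s with Some m => lexmax (prr m) acc | None => acc end)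
        own (enum 'I_n).

Definition findinfo (rcv : 'I_n -> option st) t q : option ('I_n -> bool) :=
  foldr (fun s acc => match rcv s with
                      | Some m => match info m t q with Some f => Some f | None => acc end
                      | None => acc end) None (enum 'I_n).

Definition newinfo (p : 'I_n) (r : nat) (x : st) (rcv : 'I_n -> option st) t q :=
  if (t == r) && (q == p) then Some (fun s => isSome (rcv s))
  else match info x t q with Some f => Some f | None => findinfo rcv t q end.

Definition Eg (inf : nat -> 'I_n -> option ('I_n -> bool)) t : rel 'I_n :=
  fun s q => match inf t q with Some f => f s | None => false end.

Definition verify inf (R : {set 'I_n}) t : Prop :=
  (forall q, q \in R -> inf t q <> None) /\ is_root_comp (Eg inf t) R.

Definition lockP (p : 'I_n) r inf := exists R : {set 'I_n}, p \in R /\ verify inf R (r - D).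
Definition decQ r inf := exists a (R : {set 'I_n}), 0 < a /\ a + 3 * D <= r /\
   forall t, a <= t <= a + 3 * D -> verify inf R t.

Definition trns (p : 'I_n) (x : st) (rcv : 'I_n -> option st) : st :=
  let r' := (rnd x).+1 in
  let inf' := newinfo p r' x rcv in
  let mp := mergeP (prr x) rcv in
  let pr' := if asb (lockP p r' inf') then (r', mp.2) else mp in
  let dec' := match dec x with Some v => Some v
              | None => if asb (decQ r' inf') then Some pr'.2 else None end in
  mkSt r' pr' dec' inf'.

Definition alg : Algorithm n V :=
  {| St := st; Msg := st;
     init := fun p v => mkSt 0 (0, v) None (fun _ _ => None);
     send := fun _ x => x;
     trans := trns;
     decision := fun _ x => dec x |}.
End Alg.
Set Implicit Arguments.
Unset Strict Implicit.
Unset Printing Implicit Defensive.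

Section Gen.
Variables (D n : nat) (disp : Order.disp_t) (V : orderType disp).
Local Notation st := (st n V).

Lemma lexle_refl (a : nat * V) : lexle a a.
Proof. by rewrite /lexle eqxx lexx orbT. Qed.

Lemma lexle_trans (a b c : nat * V) : lexle a b -> lexle b c -> lexle a c.
Proof.
case: a b c => [a1 a2] [b1 b2] [c1 c2]; rewrite /lexle /=.
case/orP => [h1|/andP[/eqP <- h2]]; case/orP => [h3|/andP[/eqP <- h4]].
- by rewrite (ltn_trans h1 h3).
- by rewrite h1.
- by rewrite h3.
- by rewrite eqxx (le_trans h2 h4) orbT.
Qed.

Lemma lexle_total (a b : nat * V) : lexle a b || lexle b a.
Proof.
case: a b => [a1 a2] [b1 b2]; rewrite /lexle /=.
case: (ltngtP a1 b1) => h //=; exact: le_total.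
Qed.

Lemma lexle_lmax (a b : nat * V) : lexle a (lexmax a b).
Proof. rewrite /lexmax; case: ifP => // _; exact: lexle_refl. Qed.
Lemma lexle_rmax (a b : nat * V) : lexle b (lexmax a b).
Proof.
rewrite /lexmax; case: ifP => h; first exact: lexle_refl.
by move: (lexle_total a b); rewrite h.
Qed.

Lemma lexle_fst (a b : nat * V) : lexle a b -> a.1 <= b.1.
Proof. by rewrite /lexle => /orP[/ltnW|/andP[/eqP->]]. Qed.

Lemma lexle_eqfst (a b : nat * V) : lexle a b -> a.1 = b.1 -> (a.2 <= b.2)%O.
Proof. by rewrite /lexle => /orP[h e|/andP[_ ->]] //; rewrite e ltnn in h. Qed.

Lemma mergeP_ge_own own (rcv : 'I_n -> option st) : lexle own (mergeP own rcv).
Proof.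
rewrite /mergeP; elim: (enum 'I_n) => [|s l IH] /=; first exact: lexle_refl.
case: (rcv s) => // m; exact: lexle_trans IH (lexle_rmax _ _).
Qed.

Lemma mergeP_ge own (rcv : 'I_n -> option st) s m :
  rcv s = Some m -> lexle (prr m) (mergeP own rcv).
Proof.
rewrite /mergeP => hs; have : s \in enum 'I_n by rewrite mem_enum.
elim: (enum 'I_n) => [|s' l IH] //=; rewrite inE => /orP[/eqP <-|/IH h].
- by rewrite hs; apply: lexle_lmax.
- by case: (rcv s') => // m'; exact: lexle_trans h (lexle_rmax _ _).
Qed.

Lemma mergeP_in own (rcv : 'I_n -> option st) :
  mergeP own rcv = own \/ exists s m, rcv s = Some m /\ mergeP own rcv = prr m.
Proof.
rewrite /mergeP; elim: (enum 'I_n) => [|s l IH] /=; first by left.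
case E: (rcv s) => [m|] //; rewrite /lexmax; case: ifP => _; last by right; exists s, m.
by [].
Qed.

Lemma findinfo_some (rcv : 'I_n -> option st) t q f :
  findinfo rcv t q = Some f -> exists s m, rcv s = Some m /\ info m t q = Some f.
Proof.
rewrite /findinfo; elim: (enum 'I_n) => [|s l IH] //=.
case E: (rcv s) => [m|] //; case E2: (info m t q) => [g|] //.
by case=> <-; exists s, m.
Qed.

Lemma findinfo_none (rcv : 'I_n -> option st) t q s m :
  rcv s = Some m -> info m t q <> None -> findinfo rcv t q <> None.
Proof.
rewrite /findinfo => hs hi; have : s \in enum 'I_n by rewrite mem_enum.
elim: (enum 'I_n) => [|s' l IH] //=; rewrite inE => /orP[/eqP <-|/IH h].
- by rewrite hs; case: (info m t q) hi.
- by case: (rcv s') => // m'; case: (info m' t q).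
Qed.
End Gen.

Lemma path_into (n : nat) (e e' : rel 'I_n) (R : {set 'I_n}) :
  (forall s q, q \in R -> e s q = e' s q) ->
  (forall p q, p \in R -> q \notin R -> ~~ e q p) ->
  forall p u, path e u p -> last u p \in R -> u \in R /\ path e' u p.
Proof.
move=> he hno; elim=> [|w p IH] u /=; first by [].
case/andP=> euw pw hl; case: (IH _ pw hl) => wR pw'.
have uR : u \in R by apply/negPn/negP => uR; move: (hno _ _ wR uR); rewrite euw.
by rewrite uR -he // euw.
Qed.

Lemma connect_into (n : nat) (e e' : rel 'I_n) (R : {set 'I_n}) u v :
  (forall s q, q \in R -> e s q = e' s q) ->
  (forall p q, p \in R -> q \notin R -> ~~ e q p) ->
  v \in R -> connect e u v -> u \in R /\ connect e' u v.
Proof.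
move=> he hno vR /connectP[p pp ev]; rewrite ev in vR; case: (path_into he hno pp vR) => uR pp'.
by split => //; apply/connectP; exists p.
Qed.

Lemma root_local (n : nat) (e e' : rel 'I_n) (R : {set 'I_n}) :
  (forall s q, q \in R -> e s q = e' s q) -> is_root_comp e R -> is_root_comp e' R.
Proof.
move=> he [[x Rx] hno].
have xR : x \in R by rewrite Rx inE !connect0.
have hno' : forall p q, p \in R -> q \notin R -> ~~ e' q p by move=> p q pR qR; rewrite -he // hno.
have he' : forall s q, q \in R -> e' s q = e s q by move=> s q qR; rewrite he.
split=> //; exists x; rewrite Rx; apply/setP => y; rewrite !inE.
apply/idP/idP => /andP[h1 h2].
- case: (connect_into he hno xR h2) => yR h2'.
  by case: (connect_into he hno yR h1) => _ ->; rewrite h2'.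
- case: (connect_into he' hno' xR h2) => yR h2'.
  by case: (connect_into he' hno' yR h1) => _ ->; rewrite h2'.
Qed.

Lemma chain_rcons (n : nat) (G : graph_seq n) k t p q :
  chain G t k.+1 p q <-> exists m, chain G t k p m /\ causes G (t + k) m q.
Proof.
elim: k t p => [|k IH] t p /=.
- split.
  + by case=> m [h e]; subst m; exists p; rewrite addn0.
  + by case=> m [e h]; subst m; exists q; rewrite addn0 in h.
- split.
  + case=> m [h1 h2]; case/IH: h2 => m' [h3 h4]; exists m'; split; first by exists m.
    by rewrite addSnnS in h4.
  + case=> m [[m' [h1 h2]] h3]; exists m'; split => //; apply/IH; exists m; split => //.
    by rewrite addSnnS.
Qed.

Lemma causes_refl (n : nat) (G : graph_seq n) t p : causes G t p p.
Proof. by rewrite /causes eqxx. Qed.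

Lemma chain_ext (n : nat) (G : graph_seq n) t k j p q :
  k <= j -> chain G t k p q -> chain G t j p q.
Proof.
move=> kj; rewrite -(subnKC kj); elim: (j - k) => [|i IH]; first by rewrite addn0.
move=> h; rewrite addnS; apply/chain_rcons; exists q; split; [exact: IH|exact: causes_refl].
Qed.
Set Implicit Arguments.
Unset Strict Implicit.
Unset Printing Implicit Defensive.

Section Run.
Variables (D n : nat) (disp : Order.disp_t) (V : orderType disp).
Variables (G : graph_seq n) (inp : 'I_n -> V).

Local Notation S r p := (state (alg D n V) G inp r p).
Local Notation rcvf r p := (fun q => if G r.+1 q p then Some (S r q) else None).

Lemma S_step r p : S r.+1 p = trns D p (S r p) (rcvf r p).
Proof. by []. Qed.

Lemma rnd_S r p : rnd (S r p) = r.
Proof. elim: r p => [|r IH] p //; by rewrite S_step /trns /= IH. Qed.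

Lemma info_S r p : info (S r.+1 p) = newinfo p r.+1 (S r p) (rcvf r p).
Proof. by rewrite S_step /trns rnd_S. Qed.

Lemma info_true r p t q f :
  info (S r p) t q = Some f -> 1 <= t <= r /\ forall s, f s = G t s q.
Proof.
elim: r p t q f => [|r IH] p t q f; first by [].
rewrite info_S /newinfo; case: ifP => [/andP[/eqP -> /eqP ->] [<-]|_].
  split; first by rewrite leqnn.
  by move=> s /=; case: (G r.+1 s p).
case E: (info (S r p) t q) => [g|].
  by case=> <-; case: (IH _ _ _ _ E) => /andP[h1 h2] h3; rewrite h1 (leqW h2).
case/findinfo_some => s [m [hs hm]].
move: hs; case: (G r.+1 s p) => // [[hm']]; rewrite -hm' in hm.
by case: (IH _ _ _ _ hm) => /andP[h1 h2] h3; rewrite h1 (leqW h2).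
Qed.

Lemma info_persist r p t q : info (S r p) t q <> None -> info (S r.+1 p) t q <> None.
Proof.
rewrite info_S /newinfo; case: ifP => // _.
by case: (info (S r p) t q).
Qed.

Lemma info_recv r p s t q : G r.+1 s p -> info (S r s) t q <> None ->
  info (S r.+1 p) t q <> None.
Proof.
move=> hG hi; rewrite info_S /newinfo; case: ifP => // _.
case: (info (S r p) t q) => // ; apply: (findinfo_none (s := s) (m := S r s)) => //.
by rewrite hG.
Qed.

Lemma info_chain t k q p : 1 <= t -> chain G t.+1 k q p -> info (S (t + k) p) t q <> None.
Proof.
move=> t1; elim: k p => [|k IH] p.
  move=> /= ->; rewrite addn0; case: t t1 => // t _.
  by rewrite info_S /newinfo !eqxx.
case/chain_rcons => m [hc hca]; move: (IH _ hc); rewrite addnS.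
case/orP: hca => [/eqP -> |hG]; first exact: info_persist.
move=> h; apply: (info_recv (s := m)) => //; by rewrite -addSnnS.
Qed.

Lemma verify_sound r p R t : verify (info (S r p)) R t ->
  1 <= t <= r /\ is_root_comp (G t) R.
Proof.
case=> hk hr.
have he : forall s q, q \in R -> Eg (info (S r p)) t s q = G t s q.
  move=> s q qR; rewrite /Eg; case E: (info (S r p) t q) => [f|]; last by move: (hk _ qR); rewrite E.
  by case: (info_true E) => _ ->.
split; last exact: root_local he hr.
case: hr => [[x Rx] _]; have xR : x \in R by rewrite Rx inE !connect0.
move: (hk _ xR); case E: (info (S r p) t x) => [f|] // _.
by case: (info_true E).
Qed.

Lemma verify_complete r p R t : is_root_comp (G t) R ->
  (forall q, q \in R -> info (S r p) t q <> None) -> verify (info (S r p)) R t.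
Proof.
move=> hr hk; split => //; apply: root_local hr => s q qR.
rewrite /Eg; case E: (info (S r p) t q) => [f|]; last by move: (hk _ qR); rewrite E.
by case: (info_true E) => _ ->.
Qed.

Definition mp r p := mergeP (prr (S r p)) (rcvf r p).

Lemma prr_S r p : prr (S r.+1 p) =
  if asb (lockP D p r.+1 (info (S r.+1 p))) then (r.+1, (mp r p).2) else mp r p.
Proof. by rewrite info_S S_step /trns rnd_S. Qed.

Lemma mp_in r p : mp r p = prr (S r p) \/ exists s, G r.+1 s p /\ mp r p = prr (S r s).
Proof.
rewrite /mp; case: (mergeP_in (prr (S r p)) (rcvf r p)) => [->|[s [m [hs ->]]]]; first by left.
by right; exists s; move: hs; case: (G r.+1 s p) => // [[<-]].
Qed.

Lemma mp_ge_own r p : lexle (prr (S r p)) (mp r p).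
Proof. exact: mergeP_ge_own. Qed.

Lemma mp_ge r p s : G r.+1 s p -> lexle (prr (S r s)) (mp r p).
Proof. by move=> h; have := @mergeP_ge n disp V (prr (S r p)) (rcvf r p) s (S r s); rewrite h; apply. Qed.

Lemma pr_L r p : (prr (S r p)).1 <= r.
Proof.
elim: r p => [|r IH] p //; rewrite prr_S; case: ifP => _ //.
by case: (mp_in r p) => [->|[s [_ ->]]]; apply: leqW.
Qed.

Lemma mp_le_new r p : lexle (mp r p) (prr (S r.+1 p)).
Proof.
rewrite prr_S; case: ifP => _; last exact: lexle_refl.
rewrite /lexle /=; apply/orP; left; rewrite ltnS.
by case: (mp_in r p) => [->|[s [_ ->]]]; apply: pr_L.
Qed.

Lemma pr_self r p : lexle (prr (S r p)) (prr (S r.+1 p)).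
Proof. exact: lexle_trans (mp_ge_own r p) (mp_le_new r p). Qed.

Lemma pr_recv r p s : G r.+1 s p -> lexle (prr (S r s)) (prr (S r.+1 p)).
Proof. by move=> h; exact: lexle_trans (mp_ge h) (mp_le_new r p). Qed.

Lemma pr_chain t k q p : chain G t.+1 k q p -> lexle (prr (S t q)) (prr (S (t + k) p)).
Proof.
elim: k p => [|k IH] p; first by move=> /= ->; rewrite addn0; apply: lexle_refl.
case/chain_rcons => m [hc hca]; apply: (lexle_trans (IH _ hc)); rewrite addnS.
case/orP: hca => [/eqP ->|hG]; first exact: pr_self.
by apply: pr_recv; rewrite -addSn.
Qed.

Lemma x_in r p : (prr (S r.+1 p)).2 = (prr (S r p)).2 \/
  exists s, G r.+1 s p /\ (prr (S r.+1 p)).2 = (prr (S r s)).2.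
Proof.
have -> : (prr (S r.+1 p)).2 = (mp r p).2 by rewrite prr_S; case: ifP.
by case: (mp_in r p) => [->|[s [h ->]]]; [left|right; exists s].
Qed.

Lemma x_valid r p : exists q, (prr (S r p)).2 = inp q.
Proof.
elim: r p => [|r IH] p; first by exists p.
by case: (x_in r p) => [->|[s [_ ->]]]; apply: IH.
Qed.

Lemma uniform_step T v : (forall p, (prr (S T p)).2 = v) -> forall p, (prr (S T.+1 p)).2 = v.
Proof. by move=> h p; case: (x_in T p) => [->|[s [_ ->]]]. Qed.

Lemma uniform_later T v T' : T <= T' -> (forall p, (prr (S T p)).2 = v) ->
  forall p, (prr (S T' p)).2 = v.
Proof.
move=> le; rewrite -(subnKC le); elim: (T' - T) => [|i IH]; first by rewrite addn0.
by move=> h; rewrite addnS; apply: uniform_step; apply: IH.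
Qed.

Lemma witness r p : 0 < (prr (S r p)).1 ->
  exists q, prr (S (prr (S r p)).1 q) = prr (S r p) /\
            lockP D q (prr (S r p)).1 (info (S (prr (S r p)).1 q)).
Proof.
elim: r p => [|r IH] p //.
case L: (asb (lockP D p r.+1 (info (S r.+1 p)))).
  rewrite prr_S L; cbn [fst] => _; exists p; split; first by rewrite prr_S L.
  by apply/asbP.
have -> : prr (S r.+1 p) = mp r p by rewrite prr_S L.
by case: (mp_in r p) => [->|[s [_ ->]]]; apply: IH.
Qed.

Lemma dec_S r p : dec (S r.+1 p) = match dec (S r p) with Some v => Some v
   | None => if asb (decQ D r.+1 (info (S r.+1 p))) then Some (prr (S r.+1 p)).2 else None end.
Proof. by rewrite {2}S_step /trns rnd_S -info_S S_step /trns rnd_S. Qed.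

Lemma dec_persist r r' p v : r <= r' -> dec (S r p) = Some v -> dec (S r' p) = Some v.
Proof.
move=> le; rewrite -(subnKC le); elim: (r' - r) => [|i IH]; first by rewrite addn0.
by move=> h; rewrite addnS dec_S IH.
Qed.

Lemma dec_origin r p v : dec (S r p) = Some v ->
  exists r0, r0 <= r /\ 0 < r0 /\ decQ D r0 (info (S r0 p)) /\ v = (prr (S r0 p)).2.
Proof.
elim: r => [|r IH] //; rewrite dec_S; case E: (dec (S r p)) => [w|].
  by case=> ew; subst w; case: (IH E) => r0 [h1 h2]; exists r0; rewrite (leqW h1).
case: ifP => // /asbP h [<-]; by exists r.+1.
Qed.

Lemma dec_new r p : decQ D r.+1 (info (S r.+1 p)) -> dec (S r.+1 p) <> None.
Proof. by move=> /asbP h; rewrite dec_S h; case: (dec (S r p)). Qed.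

End Run.
Set Implicit Arguments.
Unset Strict Implicit.
Unset Printing Implicit Defensive.

Lemma vstable_sub n (G : graph_seq n) r s r' s' R :
  vstable G r s R -> r <= r' -> s' <= s -> vstable G r' s' R.
Proof.
move=> h h1 h2 t /andP[t1 t2]; apply: h; rewrite (leq_trans h1 t1) /=.
exact: leq_trans t2 h2.
Qed.

Lemma root_nonempty n (e : rel 'I_n) R : is_root_comp e R -> exists x, x \in R.
Proof. by case=> [[x ->]] _; exists x; rewrite inE !connect0. Qed.

Section Main.
Variables (D n : nat) (disp : Order.disp_t) (V : orderType disp).
Variables (G : graph_seq n) (inp : 'I_n -> V).
Hypothesis D0 : 0 < D.
Hypothesis hU : forall r, 0 < r -> exists! R, is_root_comp (G r) R.
Hypothesis hB : forall r s R, 0 < r -> r <= s -> D <= s - r + 1 -> vstable G r s R ->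
         D_bounded G r s R D.

Local Notation S r p := (state (alg D n V) G inp r p).

Lemma diamD t R : 0 < t -> vstable G t (t + D).-1 R ->
  forall q p, q \in R -> chain G t D q p.
Proof.
move=> t0 hv q p qR.
have h1 : t <= (t + D).-1 by lia.
have h2 : D <= (t + D).-1 - t + 1 by lia.
case: (hB t0 h1 h2 hv) => _ _ _.
have -> : (t + D).-1 + 1 - D = t by lia.
move=> hd; have rt : is_root_comp (G t) R by apply: hv; rewrite leqnn h1.
case: (hd R rt q p qR) => j [/andP[j0 jD] hc]; exact: chain_ext jD hc.
Qed.

Lemma seen_gen t R q p r : vstable G t.+1 (t + D) R -> 1 <= t -> q \in R -> t + D <= r ->
  info (S r p) t q <> None.
Proof.
move=> hv t1 qR le.
have hc : chain G t.+1 D q p.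
  apply: (@diamD t.+1 R) => //; rewrite addSn /=; exact: hv.
have -> : r = t + (r - t) by lia.
apply: info_chain => //; apply: chain_ext hc; lia.
Qed.

Lemma verify_gen t R p r : vstable G t (t + D) R -> 1 <= t -> t + D <= r ->
  verify (info (S r p)) R t.
Proof.
move=> hv t1 le; apply: verify_complete.
  by apply: hv; rewrite leqnn leq_addr.
move=> q qR; apply: (seen_gen (R := R)) => //.
by apply: vstable_sub hv _ _.
Qed.

Lemma uniq_root t R R' : 0 < t -> is_root_comp (G t) R -> is_root_comp (G t) R' -> R = R'.
Proof.
move=> t0 h h'; case: (hU t0) => R0 [_ hu].
by rewrite -(hu _ h) -(hu _ h').
Qed.

Lemma window a R : 0 < a -> vstable G a (a + 3 * D) R ->
  exists M, forall p, (prr (S (a + 3 * D) p)).2 = M.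
Proof.
move=> a0 hv; set b := a + 3 * D.
have rootR : forall t, a <= t <= b -> is_root_comp (G t) R by move=> t ht; apply: hv.
have noin : forall t s q, a <= t <= b -> q \in R -> G t s q -> s \in R.
  move=> t s q ht qR hG; case: (rootR t ht) => _ hno; apply/negPn/negP => sR.
  by move: (hno _ _ qR sR); rewrite hG.
have causesR : forall t s q, a <= t <= b -> q \in R -> causes G t s q -> s \in R.
  move=> t s q ht qR /orP[/eqP -> //|]; exact: noin.
have lockR : forall l q, a + D <= l <= b -> q \in R -> (prr (S l q)).1 = l.
  move=> l q /andP[h1 h2] qR; case: l h1 h2 => [|l] h1 h2; first lia.
  rewrite prr_S; case: ifP => //; move/negbT/negP; case; apply/asbP.
  exists R; split => //; apply: verify_gen; [|lia|lia].
  apply: vstable_sub hv _ _; lia.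
have lockin : forall l q, lockP D q l (info (S l q)) -> a <= l - D <= b -> q \in R.
  move=> l q [R' [qR' hver]] hl; case: (verify_sound hver) => /andP[t1 _] hr.
  by rewrite (uniq_root t1 (rootR _ hl) hr).
pose r0 := a + D.
have step_ge : forall r q s, r0 <= r -> r.+1 <= b -> q \in R -> causes G r.+1 s q ->
    ((prr (S r s)).2 <= (prr (S r.+1 q)).2)%O.
  move=> r q s h1 h2 qR hc.
  have sR : s \in R by apply: (causesR r.+1 s q) => //; lia.
  have e1 : (prr (S r s)).1 = r by apply: lockR => //; lia.
  have e2 : (prr (S r.+1 q)).2 = (mp D G inp r q).2.
    by rewrite prr_S; case: ifP.
  have e3 : (mp D G inp r q).1 = r.
    case: (mp_in D G inp r q) => [->|[s' [hG ->]]]; apply: lockR; try lia => //.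
    apply: (noin r.+1 s' q) => //; lia.
  rewrite e2; apply: lexle_eqfst; last by rewrite e1 e3.
  case/orP: hc => [/eqP ->|hG]; [exact: mp_ge_own|exact: mp_ge].
have chain_ge : forall k q q', r0 + k <= b -> q \in R -> chain G r0.+1 k q' q ->
    ((prr (S r0 q')).2 <= (prr (S (r0 + k) q)).2)%O.
  elim=> [|k IH] q q' hk qR.
    by move=> /= ->; rewrite addn0.
  case/chain_rcons => m [hc hca].
  have mR : m \in R by apply: (causesR (r0.+1 + k) m q) => //; lia.
  apply: (le_trans (IH m q' _ mR hc)); first lia.
  rewrite addnS; apply: step_ge => //; try lia.
have memb : forall k q, r0 + k <= b -> q \in R ->
    exists2 q'', q'' \in R & (prr (S (r0 + k) q)).2 = (prr (S r0 q'')).2.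
  elim=> [|k IH] q hk qR; first by exists q; rewrite ?addn0.
  rewrite addnS; case: (x_in D G inp (r0 + k) q) => [->|[s [hG ->]]].
    by apply: IH => //; lia.
  apply: IH; first lia.
  by apply: (noin (r0 + k).+1 s q) => //; lia.
have allge : forall r q q', a + 2 * D <= r <= b -> q \in R -> q' \in R ->
    ((prr (S r0 q')).2 <= (prr (S r q)).2)%O.
  move=> r q q' hr qR q'R.
  have -> : r = r0 + (r - r0) by lia.
  apply: chain_ge => //; first lia.
  apply: chain_ext (_ : D <= r - r0) _; first lia.
  apply: (@diamD r0.+1 R) => //; apply: (vstable_sub hv); lia.
case: (root_nonempty (rootR a _)) => [|q0 q0R]; first lia.
pose M := (prr (S (a + 2 * D) q0)).2.
have RM : forall r q, a + 2 * D <= r <= b -> q \in R -> (prr (S r q)).2 = M.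
  move=> r q hr qR; apply/le_anti/andP; split.
    case: (memb (r - r0) q _ qR) => [|q'' q''R]; first lia.
    have -> : r0 + (r - r0) = r by lia.
    move=> ->; apply: allge => //; lia.
  case: (memb (a + 2 * D - r0) q0 _ q0R) => [|q'' q''R]; first lia.
  have -> : r0 + (a + 2 * D - r0) = a + 2 * D by lia.
  rewrite /M => ->; exact: allge.
exists M => p.
pose t := a + 2 * D.
have hc : chain G t.+1 D q0 p.
  apply: (@diamD t.+1 R) => //; apply: (vstable_sub hv); rewrite /t; lia.
have := @pr_chain D n disp V G inp _ _ _ _ hc; have -> : t + D = b by rewrite /t /b; lia.
have -> : prr (S t q0) = (t, M).
  by rewrite [LHS]surjective_pairing (lockR t q0) //= /t; lia.
move=> hle; have tP := lexle_fst hle; rewrite /= in tP.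
have Pb := pr_L D G inp b p.
case: (@witness D n disp V G inp b p _) => [|q' [e hl]]; first lia.
have q'R : q' \in R by apply: (lockin _ _ hl); lia.
rewrite -e; apply: RM => //; lia.
Qed.


Lemma dec_unif r p v : dec (S r p) = Some v -> exists T, forall q, (prr (S T q)).2 = v.
Proof.
case/dec_origin => r0 [_ [r00 [[a [R [a0 [ha hver]]]] ->]]].
have hv : vstable G a (a + 3 * D) R.
  by move=> t ht; case: (verify_sound (hver t ht)).
case: (window a0 hv) => M hM; exists r0.
have hU' := uniform_later (leq_trans (leqnn _) ha) hM.
by move=> q; rewrite !hU'.
Qed.

Lemma term rST : good_start G D rST -> forall p, exists v, dec (S (rST + 4 * D + 1) p) = Some v.
Proof.
case=> r0 [d [hd [R [hv _]]]] p.
rewrite addn1; case E: (dec (S (rST + 4 * D).+1 p)) => [v|]; first by exists v.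
exfalso.
have h : decQ D (rST + 4 * D).+1 (info (S (rST + 4 * D).+1 p)).
  exists rST, R; split => //; split; first lia.
  move=> t ht; apply: verify_gen; [|lia|lia].
  apply: (vstable_sub hv); lia.
exact: (@dec_new D n disp V G inp _ p h E).
Qed.

End Main.

Theorem theorem1 :
  forall (D : nat), 0 < D ->
  forall (n : nat), 2 <= n ->
  forall (disp : Order.disp_t) (V : orderType disp),
  exists A : Algorithm n V,
    forall (G : graph_seq n) (inp : 'I_n -> V),
      simple_graphs G -> Assumption1 G D ->
      solves_consensus A G inp /\
      (forall rST, good_start G D rST ->
         (forall r, good_start G D r -> rST <= r) ->
         forall p, exists v, decided A G inp p (rST + 4 * D + 1) v).
Proof.
move=> D D0 n _ disp V; exists (alg D n V) => G inp _ [hU hB [r hr]].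
split; last by move=> rST h _ p; case: (@term D n disp V G inp D0 hB rST h p) => v hv; exists v.
split.
- by move=> p r1 r2 v le; rewrite /decided /=; apply: dec_persist.
- move=> p q r1 r2 v w; rewrite /decided /= => h1 h2.
  case: (@dec_unif D n disp V G inp D0 hU hB _ _ _ h1) => T1 hT1; case: (@dec_unif D n disp V G inp D0 hU hB _ _ _ h2) => T2 hT2.
  have e1 := uniform_later (leq_maxl T1 T2) hT1.
  have e2 := uniform_later (leq_maxr T1 T2) hT2.
  by rewrite -(e1 p) (e2 p).
- move=> p r1 v; rewrite /decided /= => /dec_origin [r0 [_ [_ [_ ->]]]].
  exact: x_valid.
- move=> p; case: (@term D n disp V G inp D0 hB r hr p) => v hv; by exists (r + 4 * D + 1), v.
Qed.
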